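(* Let $0<\omega\le\pi/2$ and let $\mathcal{O}$ be a convex polygon with exactly $3$ narrow vertices. Then for every valid $\omega$-probe $\mathcal{W}(\omega,q,H_1,H_2)$ of $\mathcal{O}$, at least one of the rays $H_1,H_2$ contains a narrow vertex of $\mathcal{O}$.
   Context: A vertex of a convex polygon $\mathcal{O}$ is a narrow vertex if the internal angle of $\mathcal{O}$ at that vertex is at most $\omega$. An $\omega$-wedge $\mathcal{W}(\omega,q,H_1,H_2)$ is the closed region formed by a point $q$ (the apex), two rays $H_1,H_2$ emanating from $q$ with angle $\omega$ between them such that $H_2$ is obtained from $H_1$ by a counterclockwise rotation by $\omega$, and all points between them. A valid $\omega$-probe of $\mathcal{O}$ is an $\omega$-wedge containing $\mathcal{O}$ such that each of $H_1$ and $H_2$ contains at least one point of $\mathcal{O}$. *)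

(* Defs.v *)
From Stdlib Require Import Reals.
Open Scope R_scope.

Definition pt := (R * R)%type.

(* orientation: > 0 iff c lies strictly to the left of the directed line a->b *)
Definition cross (a b c : pt) : R :=
  (fst b - fst a) * (snd c - snd a) - (snd b - snd a) * (fst c - fst a).

Definition dot (u w : pt) : R := fst u * fst w + snd u * snd w.
Definition vsub (a b : pt) : pt := (fst a - fst b, snd a - snd b).
Definition vnorm (u : pt) : R := sqrt (dot u u).

(* A convex polygon with n vertices v 0, ..., v (n-1) listed counterclockwise
   (indices modulo n): every vertex other than the endpoints of an edge lies
   strictly to the left of that edge (strict convexity = genuine vertices). *)
Definition nxt (n i : nat) : nat := (S i) mod n.
Definition prv (n i : nat) : nat := (i + n - 1) mod n.

Definition convex_polygon (n : nat) (v : nat -> pt) : Prop :=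
  (3 <= n)%nat /\
  forall i j, (i < n)%nat -> (j < n)%nat -> j <> i -> j <> nxt n i ->
    cross (v i) (v (nxt n i)) (v j) > 0.

Definition in_polygon (n : nat) (v : nat -> pt) (p : pt) : Prop :=
  forall i, (i < n)%nat -> cross (v i) (v (nxt n i)) p >= 0.

Definition internal_angle (n : nat) (v : nat -> pt) (i : nat) : R :=
  let a := vsub (v (prv n i)) (v i) in
  let b := vsub (v (nxt n i)) (v i) in
  acos (dot a b / (vnorm a * vnorm b)).

Definition narrow (omega : R) (n : nat) (v : nat -> pt) (i : nat) : Prop :=
  (i < n)%nat /\ internal_angle n v i <= omega.

Definition dir (theta : R) : pt := (cos theta, sin theta).

Definition on_ray (q : pt) (theta : R) (p : pt) : Prop :=
  exists t, 0 <= t /\ p = (fst q + t * cos theta, snd q + t * sin theta).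

(* omega-wedge W(omega, q, H1, H2): H1 = ray from q at angle theta,
   H2 = H1 rotated counterclockwise by omega (angle theta + omega);
   region = closed region between them (omega < pi, so it is the convex cone). *)
Definition in_wedge (omega : R) (q : pt) (theta : R) (p : pt) : Prop :=
  exists a b, 0 <= a /\ 0 <= b /\
    p = (fst q + a * cos theta + b * cos (theta + omega),
         snd q + a * sin theta + b * sin (theta + omega)).

Definition valid_probe (omega : R) (n : nat) (v : nat -> pt) (q : pt) (theta : R) : Prop :=
  (forall p, in_polygon n v p -> in_wedge omega q theta p) /\
  (exists p, in_polygon n v p /\ on_ray q theta p) /\
  (exists p, in_polygon n v p /\ on_ray q (theta + omega) p).

Definition exactly_three_narrow (omega : R) (n : nat) (v : nat -> pt) : Prop :=
  exists i j k, narrow omega n v i /\ narrow omega n v j /\ narrow omega n v k /\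
    i <> j /\ j <> k /\ i <> k /\
    forall l, narrow omega n v l -> l = i \/ l = j \/ l = k.

(* Main.v *)
Require Import Defs.
From Stdlib Require Import Reals Lra Lia Psatz Classical.
Open Scope R_scope.

Lemma nxt_char n k : (k < n)%nat ->
  ((k+1 < n)%nat /\ nxt n k = (k+1)%nat) \/ ((k+1 = n)%nat /\ nxt n k = 0%nat).
Proof.
  intros Hk. unfold nxt.
  destruct (Nat.eq_dec (k+1) n) as [E|E].
  - right. split; auto. replace (S k) with n by lia. apply Nat.Div0.mod_same.
  - left. split; [lia|]. rewrite Nat.mod_small; lia.
Qed.

Lemma prv_char n k : (k < n)%nat ->
  ((k = 0)%nat /\ prv n k = (n-1)%nat) \/ ((0 < k)%nat /\ prv n k = (k-1)%nat).
Proof.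
  intros Hk. unfold prv.
  destruct k as [|k].
  - left. split; auto. rewrite Nat.mod_small; lia.
  - right. split; [lia|]. replace (S k + n - 1)%nat with (k + 1 * n)%nat by lia.
    rewrite Nat.Div0.mod_add. rewrite Nat.mod_small; lia.
Qed.

Lemma idx_facts n k : (3 <= n)%nat -> (k < n)%nat ->
  (prv n k < n)%nat /\ (nxt n k < n)%nat /\ nxt n (prv n k) = k /\
  nxt n k <> prv n k /\ nxt n k <> k /\ prv n k <> k.
Proof.
  intros H3 Hk.
  destruct (nxt_char n k Hk) as [[A B]|[A B]];
  destruct (prv_char n k Hk) as [[C D]|[C D]]; rewrite ?B, ?D;
  (split; [lia|]); (split; [lia|]);
  (split; [|lia]).
  - destruct (nxt_char n (n-1)) as [[E F]|[E F]]; lia.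
  - destruct (nxt_char n (k-1)) as [[E F]|[E F]]; lia.
  - destruct (nxt_char n (n-1)) as [[E F]|[E F]]; lia.
  - destruct (nxt_char n (k-1)) as [[E F]|[E F]]; lia.
Qed.
Lemma sin_p2pi x : sin (x + 2*PI) = sin x.
Proof. rewrite sin_plus, cos_2PI, sin_2PI. ring. Qed.
Lemma sin_mpi x : sin (x - PI) = - sin x.
Proof. rewrite sin_minus, cos_PI, sin_PI. ring. Qed.

Lemma sin_neg_range x : PI <= x -> x <= 2*PI -> sin x <= 0.
Proof. intros. assert (0 <= sin (x - PI)) by (apply sin_ge_0; lra).
  rewrite sin_mpi in H1. lra. Qed.

Lemma polar (X Y : R) : X*X+Y*Y > 0 -> exists t, 0 <= t < 2*PI /\
  X = sqrt (X*X+Y*Y) * cos t /\ Y = sqrt (X*X+Y*Y) * sin t.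
Proof.
  intros Hp. set (r := sqrt (X*X+Y*Y)).
  assert (Hr : 0 < r) by (apply sqrt_lt_R0; lra).
  assert (Hrr : r * r = X*X+Y*Y) by (apply sqrt_sqrt; lra).
  set (c := X / r). set (s := Y / r).
  assert (HX : X = r * c) by (unfold c; field; lra).
  assert (HY : Y = r * s) by (unfold s; field; lra).
  assert (Hcs : c*c + s*s = 1).
  { apply (Rmult_eq_reg_l (r*r)); [|nra]. rewrite Rmult_1_r.
    replace (r*r*(c*c+s*s)) with ((r*c)*(r*c)+(r*s)*(r*s)) by ring. rewrite <- HX, <- HY. lra. }
  assert (Hc2 : c*c <= 1) by nra.
  assert (Hc : -1 <= c <= 1).
  { destruct (Rle_dec c 1); destruct (Rle_dec (-1) c); split; auto; nra. }
  assert (Hsq : sqrt (1 - c²) = Rabs s).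
  { replace (1 - c²) with (s²) by (unfold Rsqr; lra). apply sqrt_Rsqr_abs. }
  destruct (Rle_dec 0 Y) as [HYp|HYn].
  - exists (acos c). pose proof (acos_bound c). pose proof PI_RGT_0. split. { split; lra. }
    rewrite cos_acos by auto. rewrite sin_acos by auto. rewrite Hsq.
    rewrite Rabs_right by (apply Rle_ge; unfold s; apply Rmult_le_pos; [lra| left; apply Rinv_0_lt_compat; lra]).
    fold r. split; auto.
  - assert (Hs : s < 0) by (unfold s; apply Rdiv_neg_pos; lra).
    assert (Ha : 0 < acos c).
    { pose proof (acos_bound c). destruct (Req_dec (acos c) 0) as [E|E]; [|lra].
      exfalso. assert (cos (acos c) = 1) by (rewrite E; apply cos_0).
      rewrite cos_acos in H0 by auto. nra. }
    exists (2*PI - acos c). pose proof (acos_bound c). pose proof PI_RGT_0. split. { split; lra. }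
    rewrite cos_minus, sin_minus, cos_2PI, sin_2PI, cos_acos, sin_acos by auto.
    rewrite Hsq, Rabs_left by auto. fold r. split; [rewrite HX|rewrite HY]; ring.
Qed.

Lemma acos_le x om : 0 < om -> om <= PI/2 -> acos x <= om -> cos om <= x.
Proof.
  intros H0 H1 H. pose proof PI_RGT_0.
  destruct (Rle_dec x (-1)) as [A|A].
  { assert (acos x = PI) by (unfold acos; destruct (Rle_dec x (-1)); tauto). lra. }
  destruct (Rle_dec 1 x) as [B|B].
  - pose proof (COS_bound om). lra.
  - assert (cos (acos x) = x) by (apply cos_acos; lra).
    pose proof (acos_bound x).
    destruct (Rle_lt_or_eq_dec _ _ H) as [C|C].
    + pose proof (cos_decreasing_1 (acos x) om ltac:(lra) ltac:(lra) ltac:(lra) ltac:(lra) C). lra.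
    + rewrite <- C. lra.
Qed.

Lemma arc_core om al be : 0 < om -> om <= PI/2 -> 0 <= al < 2*PI -> 0 <= be < 2*PI ->
  sin (be - al) > 0 -> cos (be - al) <= - cos om ->
  ~ (sin al <= 0 /\ 0 <= sin be) -> ~ (0 <= sin (al - om) /\ 0 <= sin (om - be)) ->
  0 < al /\ be < PI + om /\ PI - om <= be - al /\ be - al < PI.
Proof.
  intros H0 H1 Ha Hb Hs Hc N1 N2. pose proof PI_RGT_0.
  destruct (Rlt_le_dec be al) as [L|L].
  - exfalso.
    assert (Hd : sin (be - al + 2*PI) > 0) by (rewrite sin_p2pi; auto).
    assert (be - al + 2*PI < PI).
    { destruct (Rlt_le_dec (be - al + 2*PI) PI); auto.
      pose proof (sin_neg_range (be - al + 2*PI) ltac:(lra) ltac:(lra)). lra. }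
    apply N1. split.
    + apply sin_neg_range; lra.
    + apply sin_ge_0; lra.
  - assert (Hdp : be - al < PI).
    { destruct (Rlt_le_dec (be - al) PI); auto.
      pose proof (sin_neg_range (be - al) ltac:(lra) ltac:(lra)). lra. }
    assert (Hd0 : 0 < be - al).
    { destruct (Rle_lt_or_eq_dec _ _ L) as [E|E]; [lra|].
      rewrite E, Rminus_diag, sin_0 in Hs. lra. }
    assert (Hd1 : PI - om <= be - al).
    { destruct (Rlt_le_dec (be - al) (PI - om)) as [E|E]; auto.
      pose proof (cos_decreasing_1 (be - al) (PI - om) ltac:(lra) ltac:(lra) ltac:(lra) ltac:(lra) E).
      rewrite cos_minus, cos_PI, sin_PI in H2. lra. }
    assert (Hal : 0 < al).
    { destruct (Rle_lt_or_eq_dec _ _ (proj1 Ha)) as [E|E]; auto.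
      exfalso. apply N1. rewrite <- E, sin_0. split; [lra|]. apply sin_ge_0; lra. }
    repeat split; auto.
    destruct (Rlt_le_dec be (PI + om)) as [E|E]; auto.
    exfalso. apply N2. split.
    + apply sin_ge_0; lra.
    + replace (om - be) with (- (be - om)) by ring. rewrite sin_neg.
      rewrite <- (sin_mpi (be - om)) in *. 
      assert (0 <= sin (be - om - PI)) by (apply sin_ge_0; lra). lra.
Qed.

Lemma nz a b c d : a*d - b*c > 0 -> a*a+b*b > 0 /\ c*c+d*d > 0.
Proof.
  intros H. split.
  - destruct (Req_dec a 0) as [A|A]; [destruct (Req_dec b 0) as [B|B]|].
    + subst. lra.
    + pose proof (Rsqr_pos_lt b B). unfold Rsqr in *. nra.
    + pose proof (Rsqr_pos_lt a A). unfold Rsqr in *. nra.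
  - destruct (Req_dec c 0) as [A|A]; [destruct (Req_dec d 0) as [B|B]|].
    + subst. lra.
    + pose proof (Rsqr_pos_lt d B). unfold Rsqr in *. nra.
    + pose proof (Rsqr_pos_lt c A). unfold Rsqr in *. nra.
Qed.

Definition arcP om (Xa Ya Xb Yb al be : R) : Prop :=
  0 < al /\ be < PI + om /\ PI - om <= be - al /\ be - al < PI /\
  0 < sqrt (Xa*Xa+Ya*Ya) /\ 0 < sqrt (Xb*Xb+Yb*Yb) /\
  Xa = sqrt (Xa*Xa+Ya*Ya) * cos al /\ Ya = sqrt (Xa*Xa+Ya*Ya) * sin al /\
  Xb = sqrt (Xb*Xb+Yb*Yb) * cos be /\ Yb = sqrt (Xb*Xb+Yb*Yb) * sin be.

Lemma arc om Xa Ya Xb Yb : 0 < om -> om <= PI/2 ->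
  Xa*Yb - Ya*Xb > 0 ->
  Xa*Xb+Ya*Yb <= - cos om * sqrt (Xa*Xa+Ya*Ya) * sqrt (Xb*Xb+Yb*Yb) ->
  ~ (Ya <= 0 /\ 0 <= Yb) ->
  ~ (0 <= -Xa*sin om + Ya*cos om /\ 0 <= -cos om * Yb + sin om * Xb) ->
  exists al be, arcP om Xa Ya Xb Yb al be.
Proof.
  intros H0 H1 Hc Hd N1 N2.
  destruct (nz _ _ _ _ Hc) as [Pa Pb].
  destruct (polar Xa Ya Pa) as [al [Hal [HXa HYa]]].
  destruct (polar Xb Yb Pb) as [be [Hbe [HXb HYb]]].
  exists al, be. unfold arcP.
  remember (sqrt (Xa*Xa+Ya*Ya)) as ra eqn:Era.
  remember (sqrt (Xb*Xb+Yb*Yb)) as rb eqn:Erb.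
  assert (Ra : 0 < ra) by (rewrite Era; apply sqrt_lt_R0; lra).
  assert (Rb : 0 < rb) by (rewrite Erb; apply sqrt_lt_R0; lra).
  assert (Rab : 0 < ra * rb) by nra.
  cut (0 < al /\ be < PI + om /\ PI - om <= be - al /\ be - al < PI); [intros; repeat split; tauto|].
  apply arc_core; auto.
  - assert (E : Xa*Yb - Ya*Xb = (ra*rb)*sin(be-al)) by (rewrite sin_minus, HXa, HYa, HXb, HYb; ring).
    rewrite E in Hc. destruct (Rlt_le_dec 0 (sin (be-al))) as [S|S]; [lra|]. nra.
  - assert (E : Xa*Xb + Ya*Yb = (ra*rb)*cos(be-al)) by (rewrite cos_minus, HXa, HYa, HXb, HYb; ring).
    rewrite E in Hd. destruct (Rle_dec (cos (be-al)) (- cos om)) as [S|S]; [lra|]. nra.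
  - intros [A B]. apply N1. rewrite HYa, HYb. split; nra.
  - intros [A B]. apply N2.
    assert (E1 : -Xa*sin om + Ya*cos om = ra * sin (al - om)) by (rewrite sin_minus, HXa, HYa; ring).
    assert (E2 : -cos om * Yb + sin om * Xb = rb * sin (om - be)) by (rewrite sin_minus, HXb, HYb; ring).
    rewrite E1, E2. split; nra.
Qed.

Lemma arc_disj om Xa Ya Xb Yb al be Xc Yc Xd Yd al' be' : om <= PI/2 ->
  arcP om Xa Ya Xb Yb al be -> arcP om Xc Yc Xd Yd al' be' ->
  (forall dX dY, ~ (Xa*dY - Ya*dX > 0 /\ dX*Yb - dY*Xb > 0 /\
                    Xc*dY - Yc*dX > 0 /\ dX*Yd - dY*Xd > 0)) ->
  be <= al' \/ be' <= al.
Proof.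
  intros Hom A C N.
  destruct A as [A1 [A2 [A3 [A4 [A5 [A6 [A7 [A8 [A9 A10]]]]]]]]].
  destruct C as [C1 [C2 [C3 [C4 [C5 [C6 [C7 [C8 [C9 C10]]]]]]]]].
  destruct (Rle_dec be al') as [E|E]; [auto|].
  destruct (Rle_dec be' al) as [F|F]; [auto|].
  exfalso. pose proof PI_RGT_0.
  set (g := (Rmax al al' + Rmin be be') / 2).
  assert (G1 : al < g < be /\ al' < g < be').
  { unfold g. unfold Rmax, Rmin.
    destruct (Rle_dec al al'); destruct (Rle_dec be be'); lra. }
  apply (N (cos g) (sin g)).
  set (ra := sqrt (Xa*Xa+Ya*Ya)) in *. set (rb := sqrt (Xb*Xb+Yb*Yb)) in *.
  set (rc := sqrt (Xc*Xc+Yc*Yc)) in *. set (rd := sqrt (Xd*Xd+Yd*Yd)) in *.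
  clearbody ra rb rc rd.
  rewrite A7, A8, A9, A10, C7, C8, C9, C10.
  assert (S1 : 0 < sin (g - al)) by (apply sin_gt_0; lra).
  assert (S2 : 0 < sin (be - g)) by (apply sin_gt_0; lra).
  assert (S3 : 0 < sin (g - al')) by (apply sin_gt_0; lra).
  assert (S4 : 0 < sin (be' - g)) by (apply sin_gt_0; lra).
  rewrite sin_minus in S1, S2, S3, S4.
  repeat split; nra.
Qed.

Lemma three om a1 b1 a2 b2 a3 b3 : 0 < om -> om <= PI/2 ->
  0 < a1 -> b1 < PI + om -> PI - om <= b1 - a1 ->
  0 < a2 -> b2 < PI + om -> PI - om <= b2 - a2 ->
  0 < a3 -> b3 < PI + om -> PI - om <= b3 - a3 ->
  (b1 <= a2 \/ b2 <= a1) -> (b2 <= a3 \/ b3 <= a2) -> (b1 <= a3 \/ b3 <= a1) -> False.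
Proof. intros. pose proof PI_RGT_0. destruct H10; destruct H11; destruct H12; lra. Qed.
Definition cr (a b : pt) : R := fst a * snd b - snd a * fst b.
Definition ea n (v : nat -> pt) k := vsub (v k) (v (prv n k)).
Definition eb n (v : nat -> pt) k := vsub (v (nxt n k)) (v k).

Lemma vert_in n v k : convex_polygon n v -> (k < n)%nat -> in_polygon n v (v k).
Proof.
  intros [H3 Hc] Hk i Hi.
  destruct (Nat.eq_dec k i) as [E|E].
  { subst. unfold cross. right; ring. }
  destruct (Nat.eq_dec k (nxt n i)) as [F|F].
  { rewrite F. unfold cross. right; ring. }
  apply Rgt_ge. apply Hc; auto.
Qed.

Lemma vert_conv n v k : convex_polygon n v -> (k < n)%nat -> cr (ea n v k) (eb n v k) > 0.
Proof.
  intros [H3 Hc] Hk.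
  destruct (idx_facts n k H3 Hk) as [I1 [I2 [I3 [I4 [I5 I6]]]]].
  pose proof (Hc (prv n k) (nxt n k) I1 I2 I4 ltac:(rewrite I3; auto)) as H.
  rewrite I3 in H. unfold cross in H. unfold cr, ea, eb, vsub; simpl.
  lra.
Qed.

Lemma support_gen n v k p d : convex_polygon n v -> (k < n)%nat -> in_polygon n v p ->
  cr (ea n v k) (eb n v k) * cr d (vsub p (v k)) =
    cr d (eb n v k) * cr (ea n v k) (vsub p (v k)) + cr (ea n v k) d * cr (eb n v k) (vsub p (v k))
  /\ cr (ea n v k) (vsub p (v k)) >= 0 /\ cr (eb n v k) (vsub p (v k)) >= 0.
Proof.
  intros Hcv Hk Hp. pose proof Hcv as [H3 Hc].
  destruct (idx_facts n k H3 Hk) as [I1 [I2 [I3 [I4 [I5 I6]]]]].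
  pose proof (Hp (prv n k) I1) as P1. pose proof (Hp k Hk) as P2.
  rewrite I3 in P1. unfold cross in P1, P2. unfold cr, ea, eb, vsub; simpl.
  split; [ring|]. split; lra.
Qed.

Lemma support n v k p d : convex_polygon n v -> (k < n)%nat -> in_polygon n v p ->
  cr (ea n v k) d >= 0 -> cr d (eb n v k) >= 0 -> cr d (vsub p (v k)) >= 0.
Proof.
  intros Hcv Hk Hp H1 H2.
  destruct (support_gen n v k p d Hcv Hk Hp) as [E [A B]].
  pose proof (vert_conv n v k Hcv Hk).
  destruct (Rge_dec (cr d (vsub p (v k))) 0) as [X|X]; auto. exfalso. nra.
Qed.

Lemma lin_y a1 a2 b1 b2 y1 y2 : a1*y2 - a2*y1 = 0 -> b1*y2 - b2*y1 = 0 ->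
  a1*b2 - a2*b1 <> 0 -> y1 = 0 /\ y2 = 0.
Proof.
  intros A B C.
  assert (Y1 : y1 * (a1*b2 - a2*b1) = 0).
  { replace (y1 * (a1*b2 - a2*b1)) with (b1*(a1*y2 - a2*y1) - a1*(b1*y2 - b2*y1)) by ring.
    rewrite A, B; ring. }
  assert (Y2 : y2 * (a1*b2 - a2*b1) = 0).
  { replace (y2 * (a1*b2 - a2*b1)) with (b2*(a1*y2 - a2*y1) - a2*(b1*y2 - b2*y1)) by ring.
    rewrite A, B; ring. }
  apply Rmult_integral in Y1, Y2. destruct Y1; destruct Y2; tauto.
Qed.

Lemma support_strict n v k p d : convex_polygon n v -> (k < n)%nat -> in_polygon n v p ->
  cr (ea n v k) d > 0 -> cr d (eb n v k) > 0 -> cr d (vsub p (v k)) > 0 \/ p = v k.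
Proof.
  intros Hcv Hk Hp H1 H2.
  destruct (support_gen n v k p d Hcv Hk Hp) as [E [A B]].
  pose proof (vert_conv n v k Hcv Hk) as C.
  destruct (Rgt_dec (cr d (vsub p (v k))) 0) as [X|X]; auto. right.
  assert (A0 : cr (ea n v k) (vsub p (v k)) = 0) by nra.
  assert (B0 : cr (eb n v k) (vsub p (v k)) = 0) by nra.
  revert A0 B0 C. unfold cr, vsub. destruct p as [p1 p2]. simpl.
  intros A0 B0 C.
  destruct (lin_y _ _ _ _ _ _ A0 B0 ltac:(lra)) as [Y1 Y2].
  destruct (v k) as [x y]; simpl in *. f_equal; lra.
Qed.

Lemma vinj n v k l : convex_polygon n v -> (k < n)%nat -> (l < n)%nat -> k <> l -> v k = v l -> False.
Proof.
  intros [H3 Hc] Hk Hl Hkl E.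
  assert (A : l = nxt n k).
  { destruct (Nat.eq_dec l (nxt n k)) as [X|X]; auto.
    pose proof (Hc k l Hk Hl ltac:(auto) X) as H. rewrite E in H. unfold cross in H. lra. }
  assert (B : k = nxt n l).
  { destruct (Nat.eq_dec k (nxt n l)) as [X|X]; auto.
    pose proof (Hc l k Hl Hk ltac:(auto) X) as H. rewrite E in H. unfold cross in H. lra. }
  destruct (nxt_char n k Hk) as [[P Q]|[P Q]];
  destruct (nxt_char n l Hl) as [[R S]|[R S]]; lia.
Qed.

Lemma disj n v k l : convex_polygon n v -> (k < n)%nat -> (l < n)%nat -> k <> l ->
  forall d, ~ (cr (ea n v k) d > 0 /\ cr d (eb n v k) > 0 /\ cr (ea n v l) d > 0 /\ cr d (eb n v l) > 0).
Proof.
  intros Hcv Hk Hl Hkl d [A [B [C D]]].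
  destruct (support_strict n v k (v l) d Hcv Hk (vert_in n v l Hcv Hl) A B) as [X|X];
    [|apply (vinj n v k l); auto].
  destruct (support_strict n v l (v k) d Hcv Hl (vert_in n v k Hcv Hk) C D) as [Y|Y];
    [|apply (vinj n v k l); auto].
  revert X Y. unfold cr, vsub; simpl. intros. lra.
Qed.

Definition RX th (x : pt) := cos th * fst x + sin th * snd x.
Definition RY th (x : pt) := cos th * snd x - sin th * fst x.

Lemma cs1 th : cos th * cos th + sin th * sin th = 1.
Proof. pose proof (sin2_cos2 th). unfold Rsqr in H. lra. Qed.

Lemma rot_cr th x y : cr x y = RX th x * RY th y - RY th x * RX th y.
Proof.
  unfold cr, RX, RY. pose proof (cs1 th).
  transitivity ((cos th * cos th + sin th * sin th) * (fst x * snd y - snd x * fst y)).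
  { rewrite H; ring. } ring.
Qed.

Lemma rot_dot th x y : dot x y = RX th x * RX th y + RY th x * RY th y.
Proof.
  unfold dot, RX, RY. pose proof (cs1 th).
  transitivity ((cos th * cos th + sin th * sin th) * (fst x * fst y + snd x * snd y)).
  { rewrite H; ring. } ring.
Qed.

Lemma rot_norm th x : vnorm x = sqrt (RX th x * RX th x + RY th x * RY th x).
Proof. unfold vnorm. f_equal. apply rot_dot. Qed.

Lemma narrow_dot om n v k : 0 < om -> om <= PI/2 -> convex_polygon n v -> narrow om n v k ->
  dot (ea n v k) (eb n v k) <= - cos om * vnorm (ea n v k) * vnorm (eb n v k).
Proof.
  intros H0 H1 Hcv [Hk Ha].
  pose proof (vert_conv n v k Hcv Hk) as C.
  unfold cr in C. destruct (nz _ _ _ _ C) as [Pa Pb].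
  assert (Na : 0 < vnorm (ea n v k)) by (unfold vnorm, dot; apply sqrt_lt_R0; lra).
  assert (Nb : 0 < vnorm (eb n v k)) by (unfold vnorm, dot; apply sqrt_lt_R0; lra).
  unfold internal_angle in Ha.
  assert (E1 : dot (vsub (v (prv n k)) (v k)) (vsub (v (nxt n k)) (v k)) = - dot (ea n v k) (eb n v k))
    by (unfold dot, ea, eb, vsub; simpl; ring).
  assert (E2 : vnorm (vsub (v (prv n k)) (v k)) = vnorm (ea n v k))
    by (unfold vnorm; f_equal; unfold dot, ea, vsub; simpl; ring).
  assert (E3 : vsub (v (nxt n k)) (v k) = eb n v k) by reflexivity.
  rewrite E1, E2, E3 in Ha.
  apply acos_le in Ha; auto.
  set (N := vnorm (ea n v k) * vnorm (eb n v k)) in *.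
  assert (NP : 0 < N) by (unfold N; nra).
  assert (X : - dot (ea n v k) (eb n v k) = (- dot (ea n v k) (eb n v k) / N) * N) by (field; lra).
  replace (- cos om * vnorm (ea n v k) * vnorm (eb n v k)) with (- (cos om * N)) by (unfold N; ring).
  nra.
Qed.

Lemma sin_om th om : sin om = sin (th+om) * cos th - cos (th+om) * sin th.
Proof. rewrite <- sin_minus. f_equal. ring. Qed.

Lemma vertex_case om n v q th m : 0 < om -> om <= PI/2 -> convex_polygon n v ->
  narrow om n v m -> valid_probe om n v q th ->
  (on_ray q th (v m) \/ on_ray q (th+om) (v m)) \/
  exists al be, arcP om (RX th (ea n v m)) (RY th (ea n v m)) (RX th (eb n v m)) (RY th (eb n v m)) al be.
Proof.
  intros H0 H1 Hcv Hn [Hw [[p1 [P1 R1]] [p2 [P2 R2]]]].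
  pose proof Hn as [Hm _].
  pose proof PI_RGT_0.
  assert (Som : 0 < sin om) by (apply sin_gt_0; lra).
  destruct (Hw (v m) (vert_in n v m Hcv Hm)) as [al [be [al0 [be0 Ev]]]].
  pose proof (sin_om th om) as SO.
  destruct (classic (RY th (ea n v m) <= 0 /\ 0 <= RY th (eb n v m))) as [C1|C1].
  { left; left.
    assert (S : cr (cos th, sin th) (vsub p1 (v m)) >= 0).
    { apply (support n v m p1); auto.
      - destruct C1. unfold cr, RY in *; cbn [fst snd]; lra.
      - destruct C1. unfold cr, RY in *; cbn [fst snd]; lra. }
    destruct R1 as [t [t0 Ep]]. rewrite Ev, Ep in S. unfold cr, vsub in S; simpl in S.
    assert (S' : - be * sin om >= 0) by (rewrite SO; lra).
    assert (be = 0) by nra. subst be.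
    exists al. split; auto. rewrite Ev. f_equal; ring. }
  destruct (classic (0 <= - RX th (ea n v m) * sin om + RY th (ea n v m) * cos om /\
                     0 <= - cos om * RY th (eb n v m) + sin om * RX th (eb n v m))) as [C2|C2].
  { left; right.
    assert (S : cr (- cos (th+om), - sin (th+om)) (vsub p2 (v m)) >= 0).
    { apply (support n v m p2); auto.
      - destruct C2. unfold cr, RX, RY in *; cbn [fst snd]. rewrite sin_plus, cos_plus. lra.
      - destruct C2. unfold cr, RX, RY in *; cbn [fst snd]. rewrite sin_plus, cos_plus. lra. }
    destruct R2 as [t [t0 Ep]]. rewrite Ev, Ep in S. unfold cr, vsub in S; simpl in S.
    assert (S' : - al * sin om >= 0) by (rewrite SO; lra).
    assert (al = 0) by nra. subst al.
    exists be. split; auto. rewrite Ev. f_equal; ring. }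
  right. apply arc; auto.
  - rewrite <- rot_cr. apply vert_conv; auto.
  - rewrite <- rot_dot, <- !rot_norm. apply narrow_dot; auto.
Qed.

Lemma disj_rot n v k l th : convex_polygon n v -> (k < n)%nat -> (l < n)%nat -> k <> l ->
  forall dX dY, ~ (RX th (ea n v k) * dY - RY th (ea n v k) * dX > 0 /\
                   dX * RY th (eb n v k) - dY * RX th (eb n v k) > 0 /\
                   RX th (ea n v l) * dY - RY th (ea n v l) * dX > 0 /\
                   dX * RY th (eb n v l) - dY * RX th (eb n v l) > 0).
Proof.
  intros Hcv Hk Hl Hkl dX dY.
  set (d := (dX * cos th - dY * sin th, dX * sin th + dY * cos th)).
  assert (EX : RX th d = dX).
  { unfold RX, d; cbn [fst snd]. pose proof (cs1 th).
    transitivity (dX * (cos th * cos th + sin th * sin th)); [ring|]. rewrite H; ring. }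
  assert (EY : RY th d = dY).
  { unfold RY, d; cbn [fst snd]. pose proof (cs1 th).
    transitivity (dY * (cos th * cos th + sin th * sin th)); [ring|]. rewrite H; ring. }
  pose proof (disj n v k l Hcv Hk Hl Hkl d) as N.
  rewrite !(rot_cr th), EX, EY in N. exact N.
Qed.

Theorem lemma6p1 (omega : R) (n : nat) (v : nat -> pt) :
  0 < omega -> omega <= PI / 2 ->
  convex_polygon n v ->
  exactly_three_narrow omega n v ->
  forall (q : pt) (theta : R),
    valid_probe omega n v q theta ->
    exists i, narrow omega n v i /\
      (on_ray q theta (v i) \/ on_ray q (theta + omega) (v i)).
Proof.
  intros H0 H1 Hcv [i [j [k [Ni [Nj [Nk [Hij [Hjk [Hik _]]]]]]]]] q th Hp.
  destruct (vertex_case omega n v q th i H0 H1 Hcv Ni Hp) as [R|[a1 [b1 A1]]]; [exists i; auto|].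
  destruct (vertex_case omega n v q th j H0 H1 Hcv Nj Hp) as [R|[a2 [b2 A2]]]; [exists j; auto|].
  destruct (vertex_case omega n v q th k H0 H1 Hcv Nk Hp) as [R|[a3 [b3 A3]]]; [exists k; auto|].
  exfalso.
  destruct Ni as [Li _]. destruct Nj as [Lj _]. destruct Nk as [Lk _].
  pose proof (arc_disj _ _ _ _ _ _ _ _ _ _ _ _ _ H1 A1 A2 (disj_rot n v i j th Hcv Li Lj Hij)) as D12.
  pose proof (arc_disj _ _ _ _ _ _ _ _ _ _ _ _ _ H1 A2 A3 (disj_rot n v j k th Hcv Lj Lk Hjk)) as D23.
  pose proof (arc_disj _ _ _ _ _ _ _ _ _ _ _ _ _ H1 A1 A3 (disj_rot n v i k th Hcv Li Lk Hik)) as D13.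
  destruct A1 as [X1 [Y1 [Z1 _]]]. destruct A2 as [X2 [Y2 [Z2 _]]]. destruct A3 as [X3 [Y3 [Z3 _]]].
  exact (three omega a1 b1 a2 b2 a3 b3 H0 H1 X1 Y1 Z1 X2 Y2 Z2 X3 Y3 Z3 D12 D23 D13).
Qed.
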